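(* Let $\ell>r\ge 2$ be integers. The function $f$ defined on integers $k\ge r$ by \[ f(k)=\frac{(k-1)(k-2)\cdots(k-r+1)}{k^{\ell-1}} \] is unimodal and attains its maximum at a unique integer $m_{r,\ell}\ge r$.
   Context: A function $h:I\to\mathbb{R}$ on $I\subseteq\mathbb{R}$ is unimodal if there is $x_0\in I$ such that $h$ is non-decreasing on $I\cap(-\infty,x_0]$ and non-increasing on $I\cap(x_0,\infty)$. *)

(* Defs.v *)
From mathcomp Require Import all_boot all_order all_algebra.
Set Implicit Arguments. Unset Strict Implicit. Unset Printing Implicit Defensive.
Import Order.TTheory GRing.Theory Num.Theory.
Local Open Scope ring_scope.

Definition fkr (R : realFieldType) (r l k : nat) : R :=
  (\prod_(1 <= i < r) (k%:R - i%:R)) / (k%:R ^+ l.-1).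

Definition unimodal_on (R : realFieldType) (D : pred nat) (h : nat -> R) : Prop :=
  exists2 x0, D x0 &
    (forall x y, D x -> D y -> (x <= y)%N -> (y <= x0)%N -> h x <= h y) /\
    (forall x y, D x -> D y -> (x0 < x)%N -> (x <= y)%N -> h y <= h x).

(* Main.v *)
Require Import Defs.
From mathcomp Require Import all_boot all_order all_algebra.
From mathcomp Require Import zify ring lra.
Import Order.TTheory GRing.Theory Num.Theory.
Local Open Scope ring_scope.

Definition PP (R : realFieldType) (r k : nat) : R := \prod_(1 <= i < r) (k%:R - i%:R).

Lemma PP_gt0 (R : realFieldType) r k : (r <= k)%N -> 0 < PP R r k.
Proof.
move=> hk; rewrite /PP big_seq; apply: prodr_gt0 => i.
rewrite mem_index_iota => /andP[_ hi]; rewrite subr_gt0 ltr_nat; lia.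
Qed.

Lemma PP_step (R : realFieldType) r k : (2 <= r)%N ->
  PP R r k.+1 * (k.+1%:R - r%:R) = PP R r k * k%:R.
Proof.
case: r => [//|r'] hr; rewrite /PP.
rewrite big_nat_recl; last lia.
rewrite big_nat_recr /=; last lia.
have -> : k.+1%:R - r'.+1%:R = k%:R - r'%:R :> R by rewrite !mulrSr; ring.
have -> : k.+1%:R - 1%:R = k%:R :> R by rewrite mulrSr; ring.
rewrite (eq_bigr (fun i => k%:R - i%:R)); last by move=> i _; rewrite !mulrSr; ring.
ring.
Qed.

Lemma geom_id (R : realFieldType) (c b : R) n : c != 0 ->
  c ^+ n.+1 - b ^+ n.+1 = (c - b) * (c ^+ n * \sum_(i < n.+1) (b / c) ^+ i).
Proof.
move=> c0; rewrite subrXX /=; congr (_ * _); rewrite mulr_sumr.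
apply: eq_bigr => i _.
have hi : (i <= n)%N by rewrite -ltnS.
move: (nat_of_ord i) hi => j hj /=.
rewrite expr_div_n mulrA -{2}(subnK hj) exprD mulrAC mulfK //.
by rewrite expf_neq0.
Qed.

Lemma fE (R : realFieldType) r n k : fkr R r n.+1 k = PP R r k / k%:R ^+ n.
Proof. by []. Qed.

Lemma f_gt0 (R : realFieldType) r n k : (2 <= r)%N -> (r <= k)%N -> 0 < fkr R r n.+1 k.
Proof.
move=> hr hk; rewrite fE divr_gt0 ?PP_gt0 // exprn_gt0 // ltr0n; lia.
Qed.

Lemma f_step (R : realFieldType) r n k : (2 <= r)%N -> (r <= k)%N ->
  fkr R r n.+1 k.+1 * ((k.+1%:R - r%:R) * k.+1%:R ^+ n) = fkr R r n.+1 k * k%:R ^+ n.+1.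
Proof.
move=> hr hk; rewrite !fE.
have k0 : k%:R != 0 :> R by rewrite pnatr_eq0; lia.
have k1 : k.+1%:R != 0 :> R by rewrite pnatr_eq0.
rewrite mulrCA divfK ?expf_neq0 // exprSr mulrA divfK ?expf_neq0 //.
by rewrite mulrC; apply: PP_step.
Qed.

Lemma natA (R : realFieldType) r n k : (r <= k.+1)%N ->
  (k.+1%:R - r%:R) * k.+1%:R ^+ n = ((k.+1 - r) * k.+1 ^ n)%N%:R :> R.
Proof. by move=> h; rewrite natrM natrB // natrX. Qed.

Lemma up_lt (R : realFieldType) r n k : (2 <= r)%N -> (r <= k)%N ->
  (fkr R r n.+1 k < fkr R r n.+1 k.+1) = ((k.+1 - r) * k.+1 ^ n < k ^ n.+1)%N.
Proof.
move=> hr hk.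
have hA : 0 < (k.+1%:R - r%:R) * k.+1%:R ^+ n :> R.
  by rewrite mulr_gt0 // ?exprn_gt0 // ?subr_gt0 ltr_nat.
rewrite -(ltr_pM2r hA) f_step // (ltr_pM2l (@f_gt0 R r n k hr hk)).
rewrite natA; last lia. by rewrite -natrX ltr_nat.
Qed.

Lemma dn_lt (R : realFieldType) r n k : (2 <= r)%N -> (r <= k)%N ->
  (fkr R r n.+1 k.+1 < fkr R r n.+1 k) = (k ^ n.+1 < (k.+1 - r) * k.+1 ^ n)%N.
Proof.
move=> hr hk.
have hA : 0 < (k.+1%:R - r%:R) * k.+1%:R ^+ n :> R.
  by rewrite mulr_gt0 // ?exprn_gt0 // ?subr_gt0 ltr_nat.
rewrite -(ltr_pM2r hA) f_step // (ltr_pM2l (@f_gt0 R r n k hr hk)).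
rewrite natA; last lia. by rewrite -natrX ltr_nat.
Qed.

Lemma noeq r n k : (1 <= n)%N -> (2 <= r)%N -> (r <= k)%N ->
  ((k.+1 - r) * k.+1 ^ n)%N != (k ^ n.+1)%N.
Proof.
move=> hn hr hk; apply/eqP => E.
have hd : (k.+1 %| k ^ n.+1)%N.
  by rewrite -E; apply: dvdn_mull; rewrite -(subnK hn) expnD dvdn_mull // expn1.
have : coprime k.+1 (k ^ n.+1) by rewrite coprimeXr // coprimeSn.
rewrite /coprime (gcdn_idPl hd); lia.
Qed.

Definition uu (R : realFieldType) n k : R := \sum_(i < n.+1) (k%:R / k.+1%:R) ^+ i.

Lemma crit (R : realFieldType) r n k : (r <= k)%N ->
  (k ^ n.+1 <= (k.+1 - r) * k.+1 ^ n)%N = (r%:R <= uu R n k).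
Proof.
move=> hk; rewrite -(ler_nat R) -natA; last lia.
rewrite natrX.
have c0 : k.+1%:R != 0 :> R by rewrite pnatr_eq0.
have G := @geom_id R _ (k%:R) n c0.
have e : k.+1%:R - k%:R = 1 :> R by rewrite mulrSr; ring.
rewrite e mul1r in G.
rewrite mulrBl -exprS -subr_ge0.
have -> : k.+1%:R ^+ n.+1 - r%:R * k.+1%:R ^+ n - k%:R ^+ n.+1
   = k.+1%:R ^+ n * (uu R n k - r%:R) :> R.
  by rewrite mulrBr -G /uu; ring.
by rewrite pmulr_rge0 ?subr_ge0 // exprn_gt0 // ltr0n.
Qed.

Lemma uu_mono (R : realFieldType) n k : uu R n k <= uu R n k.+1.
Proof.
rewrite /uu; apply: ler_sum => i _; apply: lerXn2r; rewrite ?nnegrE ?divr_ge0 //.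
rewrite ler_pdivrMr ?ltr0n // mulrAC ler_pdivlMr ?ltr0n // -!natrM ler_nat; nia.
Qed.

Lemma dn_succ r n k : (r <= k)%N -> (k ^ n.+1 <= (k.+1 - r) * k.+1 ^ n)%N ->
  (k.+1 ^ n.+1 <= (k.+2 - r) * k.+2 ^ n)%N.
Proof.
move=> hk; rewrite !(crit rat) //; last lia.
by move=> h; apply: le_trans h (uu_mono _ _ _).
Qed.

Lemma PPn (R : realFieldType) r k : (r <= k)%N ->
  PP R r k = (\prod_(1 <= i < r) (k - i))%N%:R.
Proof.
move=> hk; rewrite natr_prod /PP !big_seq; apply: eq_bigr => i.
rewrite mem_index_iota => /andP[_ hi]; rewrite natrB //; lia.
Qed.

Lemma chain_up (R : realFieldType) (h : nat -> R) a b :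
  (forall k, (a <= k)%N -> (k < b)%N -> h k < h k.+1) ->
  forall x y, (a <= x)%N -> (x < y)%N -> (y <= b)%N -> h x < h y.
Proof.
move=> H x y hx; elim: y => [//|y IH] hxy hyb.
rewrite ltnS leq_eqVlt in hxy; case/orP: hxy => [/eqP exy|hxy].
  by subst y; apply: H; lia.
apply: lt_trans (IH hxy _) (H y _ _); lia.
Qed.

Lemma chain_dn (R : realFieldType) (h : nat -> R) a :
  (forall k, (a <= k)%N -> h k.+1 < h k) ->
  forall x y, (a <= x)%N -> (x < y)%N -> h y < h x.
Proof.
move=> H x y hx; elim: y => [//|y IH] hxy.
rewrite ltnS leq_eqVlt in hxy; case/orP: hxy => [/eqP exy|hxy].
  by subst y; apply: H.
apply: lt_trans (H y _) (IH hxy); lia.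
Qed.

Lemma far_le (R : realFieldType) r n : (2 <= r)%N -> (r <= n)%N ->
  fkr R r n.+1 (r ^ n).+1 <= fkr R r n.+1 r.
Proof.
move=> hr hrn.
have hK : (r < (r ^ n).+1)%N.
  rewrite ltnS -{1}(expn1 r) leq_pexp2l //; lia.
rewrite !fE !PPn //; last lia.
rewrite ler_pdivrMr ?exprn_gt0 ?ltr0n; last by lia.
rewrite mulrAC ler_pdivlMr ?exprn_gt0 ?ltr0n //; last by lia.
rewrite -!natrX -!natrM ler_nat.
set K := (r ^ n).+1.
have h1 : (\prod_(1 <= i < r) (K - i) <= K ^ (r - 1))%N.
  rewrite -prod_nat_const_nat; apply: leq_prod => i _; lia.
have h2 : (0 < \prod_(1 <= i < r) (r - i))%N.
  rewrite big_seq prodn_cond_gt0 // => i; rewrite mem_index_iota; lia.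
apply: (@leq_trans (K ^ (r - 1) * r ^ n)); first by rewrite leq_mul2r h1 orbT.
apply: (@leq_trans (K ^ n)); last by apply: leq_pmull.
apply: (@leq_trans (K ^ (r - 1) * K)); first by rewrite leq_mul2l ltnW ?orbT.
by rewrite -expnSr leq_pexp2l //; lia.
by [].
Qed.

Theorem lemma3p2 (R : realFieldType) (r l : nat) (hr : (2 <= r)%N) (hrl : (r < l)%N) :
  unimodal_on (fun k => (r <= k)%N) (fkr R r l) /\
  exists m : nat, [/\ (r <= m)%N,
    (forall k : nat, (r <= k)%N -> fkr R r l k <= fkr R r l m) &
    (forall m' : nat, (r <= m')%N ->
       (forall k : nat, (r <= k)%N -> fkr R r l k <= fkr R r l m') -> m' = m)].
Proof.
case: l hrl => [//|n] hrl.
have hrn : (r <= n)%N by lia.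
set f := fkr R r n.+1.
pose dn k := (k ^ n.+1 <= (k.+1 - r) * k.+1 ^ n)%N.
have ex : exists k, (r <= k)%N && dn k.
  have hK : (r < (r ^ n).+1)%N by rewrite ltnS -{1}(expn1 r) leq_pexp2l //; lia.
  case: (boolP (has dn (iota r ((r ^ n).+1 - r)))) => [/hasP[k] | /hasPn H].
    by rewrite mem_iota => /andP[h1 _] hk; exists k; rewrite h1.
  have := @far_le R r n hr hrn; rewrite leNgt => /negP; case.
  apply: (@chain_up R f r (r ^ n).+1) => // k h1 h2.
  have := H k; rewrite mem_iota h1 /= => /(_ ltac:(lia)).
  rewrite /dn -ltnNge => hk; rewrite /f up_lt //.
have upk : forall k, (r <= k)%N -> ~~ dn k -> f k < f k.+1.
  by move=> k h1; rewrite /dn -ltnNge => hk; rewrite /f up_lt.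
have dnk : forall k, (r <= k)%N -> dn k -> f k.+1 < f k.
  move=> k h1; rewrite /dn leq_eqVlt eq_sym => /orP[]; last by rewrite /f dn_lt.
  by rewrite (negbTE (@noeq r n k ltac:(lia) hr h1)).
case: (ex_minnP ex) => m /andP[hm dm] minm.
have dnall : forall d, dn (m + d)%N.
  elim=> [|d IH]; first by rewrite addn0.
  rewrite addnS; apply: dn_succ IH; lia.
have incr : forall x y, (r <= x)%N -> (x < y)%N -> (y <= m)%N -> f x < f y.
  apply: chain_up => k h1 h2; apply: upk => //; apply/negP => hd.
  have := minm k; rewrite h1 hd => /(_ isT); lia.
have decr : forall x y, (m <= x)%N -> (x < y)%N -> f y < f x.
  apply: chain_dn => k h1; apply: dnk; first lia.
  by rewrite -(subnKC h1).
have fmax : forall k, (r <= k)%N -> f k <= f m.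
  move=> k hk; case: (ltngtP k m) => h.
  - by apply: ltW; apply: incr.
  - by apply: ltW; apply: decr.
  - by rewrite h.
split.
  exists m => //; split.
    move=> x y hx hy hxy hym; case: (ltngtP x y) => h.
    - by apply: ltW; apply: incr.
    - lia.
    - by rewrite h.
  move=> x y hx hy hmx hxy; case: (ltngtP x y) => h.
  - by apply: ltW; apply: decr; lia.
  - lia.
  - by rewrite h.
exists m; split => // m' hm' H.
case: (ltngtP m' m) => h //.
- by have := H m hm; rewrite leNgt incr.
- by have := H m hm; rewrite leNgt decr //; lia.
Qed.
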